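(* Let $C$ be a binary linear self-dual code of length $n$ with exact weight enumerator $W$ and derivatives $W_{<t>}$. Then for every integer $t$ with $0\le t\le n$, $W_{<t>}$ lies in the eigenspace of the eigenvalue $1$ of $K^{[n-t]}$, i.e. $W_{<t>}K^{[n-t]}=W_{<t>}$ (with $W_{<t>}$ regarded as a row vector and $K^{[0]}=[1]$).
   Context: $F=\{0,1\}$ is the binary field. A binary linear self-dual code $C$ of length $n$ is a linear subspace of $F^n$ of dimension $n/2$ equal to its orthogonal complement under the standard dot product. The exact weight enumerator of $C$ is the row vector $W\in\mathbb{Q}^{2^n}$ whose entries are labeled by the vectors of $F^n$ in lexicographic order, with $W[v]=1$ if $v\in C$ and $W[v]=0$ otherwise. Let $\rho=\sqrt2-1$. For $0\le t\le n$, the $t$-th derivative of $W$ is the row vector $W_{<t>}$ of length $2^{n-t}$ with entries labeled (in lexicographic order) by $v\in F^{n-t}$ given by $W_{<t>}[v]=\sum_{u\in F^t}\rho^{wt(u)}W[uv]$, where $wt(u)$ is the Hamming weight of $u$ and $uv$ is the concatenation of $u$ and $v$. $K=\frac{1}{\sqrt2}\begin{bmatrix}1&1\\1&-1\end{bmatrix}$, $K^{[1]}=K$, $K^{[m]}=K^{[m-1]}\otimes K$ (Kronecker product). *)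

(* Defs.v *)
From HB Require Import structures.
From mathcomp Require Import all_boot all_order all_algebra.
Set Implicit Arguments. Unset Strict Implicit. Unset Printing Implicit Defensive.
Import Order.TTheory GRing.Theory Num.Theory.
Local Open Scope ring_scope.

(* C is a binary linear self-dual code of length n: a linear subspace
   (over F_2: contains 0 and closed under +) of dimension n/2
   (|C|^2 = 2^n) that equals its orthogonal complement for the standard
   dot product  v . c = v *m c^T. *)
Definition self_dual (n : nat) (C : {set 'rV['F_2]_n}) : Prop :=
  [/\ 0 \in C,
      {in C &, forall u v, u + v \in C},
      (#|C| ^ 2 = 2 ^ n)%N &
      forall v : 'rV['F_2]_n, (v \in C) = [forall c in C, v *m c^T == 0]].

Lemma pow2_gt0 (m : nat) : (0 < 2 ^ m)%N.
Proof. by rewrite expn_gt0. Qed.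

(* Lexicographic labelling of F^m by 'I_(2^m): v_1 is the most
   significant bit. *)
Definition lexnum (m : nat) (v : 'rV['F_2]_m) : nat :=
  \sum_(i < m) ((v 0%R i != 0%R) * 2 ^ (m - i.+1))%N.

Definition idx_of_vec (m : nat) (v : 'rV['F_2]_m) : 'I_(2 ^ m) :=
  Ordinal (ltn_pmod (lexnum v) (pow2_gt0 m)).

Definition vec_of_idx (m : nat) (k : 'I_(2 ^ m)) : 'rV['F_2]_m :=
  \row_(i < m) ((odd (k %/ 2 ^ (m - i.+1)))%:R : 'F_2).

Definition wt (m : nat) (u : 'rV['F_2]_m) : nat := #|[pred i | u 0 i != 0]|.

Lemma concat_lt (n t : nat) (j : 'I_n) : (t <= j)%N -> (j - t < n - t)%N.
Proof. by move=> h; rewrite ltn_sub2r // (leq_ltn_trans h). Qed.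

Definition concat (n t : nat) (u : 'rV['F_2]_t) (v : 'rV['F_2]_(n - t))
  : 'rV['F_2]_n :=
  \row_(j < n) match ltnP j t with
               | LtnNotGeq h => u 0 (Ordinal h)
               | GeqNotLtn h => v 0 (Ordinal (concat_lt h))
               end.

Section Enum.
Variable R : rcfType.

Definition rho : R := Num.sqrt 2 - 1.

Definition W (n : nat) (C : {set 'rV['F_2]_n}) : 'rV[R]_(2 ^ n) :=
  \row_(k < 2 ^ n) (if vec_of_idx k \in C then 1 else 0).

Definition Wder (n : nat) (C : {set 'rV['F_2]_n}) (t : nat)
  : 'rV[R]_(2 ^ (n - t)) :=
  \row_(k < 2 ^ (n - t))
     \sum_(u : 'rV['F_2]_t)
        rho ^+ wt u * W C 0 (idx_of_vec (concat u (vec_of_idx k))).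

(* Kronecker product, with lexicographic index (i1,i2) |-> i1 * m2 + i2 *)
Lemma kron_div (m1 m2 : nat) (i : 'I_(m1 * m2)) : (i %/ m2 < m1)%N.
Proof.
case: m2 i => [|m2] i; first by case: i => i; rewrite muln0.
by rewrite ltn_divLR // ltn_ord.
Qed.

Lemma kron_mod (m1 m2 : nat) (i : 'I_(m1 * m2)) : (i %% m2 < m2)%N.
Proof.
case: m2 i => [|m2] i; first by case: i => i; rewrite muln0.
by rewrite ltn_pmod.
Qed.

Definition kron (m1 n1 m2 n2 : nat) (A : 'M[R]_(m1, n1)) (B : 'M[R]_(m2, n2))
  : 'M[R]_(m1 * m2, n1 * n2) :=
  \matrix_(i < m1 * m2, j < n1 * n2)
     (A (Ordinal (kron_div i)) (Ordinal (kron_div j))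
      * B (Ordinal (kron_mod i)) (Ordinal (kron_mod j))).

Definition Kmat : 'M[R]_2 :=
  (Num.sqrt 2)^-1 *: \matrix_(i < 2, j < 2)
     (if (i == 1 :> nat) && (j == 1 :> nat) then -1 else 1).

Fixpoint Kpow (m : nat) : 'M[R]_(2 ^ m) :=
  match m with
  | 0 => 1%:M
  | m'.+1 => castmx (esym (expnSr 2 m'), esym (expnSr 2 m'))
                    (kron (Kpow m') Kmat)
  end.

End Enum.

(* Main.v *)
Require Import Defs.
From HB Require Import structures.
From mathcomp Require Import all_boot all_order all_algebra. From mathcomp Require Import zify ring lra.
Import Order.TTheory GRing.Theory Num.Theory.
Set Implicit Arguments. Unset Strict Implicit.

Lemma binsum m k : \sum_(i < m) odd (k %/ 2 ^ i) * 2 ^ i = k %% 2 ^ m.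
Proof.
elim: m k => [|m IH] k; first by rewrite big_ord0 expn0 modn1.
rewrite big_ord_recl /= expn0 divn1 muln1.
under eq_bigr => i _ do rewrite /bump /= add1n expnS divnMA mulnCA.
rewrite -big_distrr /= IH.
have hk : k = (k %/ 2) * 2 + odd k by rewrite -modn2 -divn_eq.
have hq := divn_eq (k %/ 2) (2 ^ m).
have hr := ltn_pmod (k %/ 2) (pow2_gt0 m).
move: hk hq hr; set q := k %/ 2; set r := q %% 2 ^ m; set d := q %/ 2 ^ m => hk hq hr.
have -> : k = d * 2 ^ m.+1 + (odd k + 2 * r).
  by rewrite {1}hk hq expnS; case: (odd k) => /=; lia.
rewrite modnMDl modn_small //.
have : odd k <= 1 by case: (odd k).
rewrite expnS; lia.
have : odd k <= 1 by case: (odd k).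
rewrite expnS; lia.
Qed.

Definition vn m (k : nat) : 'rV['F_2]_m := \row_(i < m) ((odd (k %/ 2 ^ (m - i.+1)))%:R : 'F_2)%R.

Lemma F2_natb (b : bool) : ((b%:R : 'F_2) != 0)%R = b.
Proof. by case: b. Qed.

Lemma lexnum_vn m k : lexnum (vn m k) = k %% 2 ^ m.
Proof.
rewrite /lexnum.
under eq_bigr => i _ do rewrite mxE F2_natb.
rewrite -binsum.
rewrite (reindex_inj rev_ord_inj) /=.
apply: eq_bigr => i _.
by rewrite subnS subKn // ?ltn_ord // subn1 prednK ?subn_gt0 // ltn_ord.
Qed.

Lemma idx_vec m (k : 'I_(2 ^ m)) : idx_of_vec (vec_of_idx k) = k.
Proof.
apply: val_inj => /=.
have -> : lexnum (vec_of_idx k) = lexnum (vn m k) by [].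
by rewrite lexnum_vn modn_mod modn_small.
Qed.

Lemma card_rV m : #|{: 'rV['F_2]_m}| = 2 ^ m.
Proof. by rewrite card_mx card_Fp // mul1n. Qed.

Lemma vec_idx m (x : 'rV['F_2]_m) : vec_of_idx (idx_of_vec x) = x.
Proof.
have inj : injective (@vec_of_idx m) by apply: (can_inj (@idx_vec m)).
have := @inj_card_onto _ _ _ inj.
rewrite card_rV card_ord leqnn => /(_ isT x) /codomP [k ->].
by rewrite idx_vec.
Qed.

Open Scope ring_scope.
Definition sg2 (R : nzRingType) (a : 'F_2) : R := if a == 0 then 1 else -1.

Lemma F2_cases (a : 'F_2) : a = 0 \/ a = 1.
Proof. by case: a => [[|[|a]] Ha] //; [left|right]; apply/val_inj. Qed.

Lemma F2_add_self (a : 'F_2) : a + a = 0.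
Proof. case: (F2_cases a) => ->; first by rewrite addr0. exact: (@val_inj _ _ _ (1+1 : 'F_2) 0 erefl). Qed.

Lemma sg2D (R : nzRingType) (a b : 'F_2) : sg2 R (a + b) = sg2 R a * sg2 R b.
Proof.
case: (F2_cases a) => ->; case: (F2_cases b) => ->;
  rewrite /sg2 ?addr0 ?add0r ?F2_add_self ?eqxx ?mul1r ?mulr1 //.
by rewrite mulrNN mulr1.
Qed.

Lemma sg2_0 (R : nzRingType) : sg2 R 0 = 1. Proof. by rewrite /sg2 eqxx. Qed.
Lemma sg2_1 (R : nzRingType) : sg2 R 1 = -1. Proof. by []. Qed.

Definition dot m (x y : 'rV['F_2]_m) : 'F_2 := (x *m y^T) 0 0.

Lemma dotE m (x y : 'rV['F_2]_m) : dot x y = \sum_i x 0 i * y 0 i.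
Proof. by rewrite /dot mxE; apply: eq_bigr => i _; rewrite mxE. Qed.

Lemma dotDl m (x y z : 'rV['F_2]_m) : dot (x + y) z = dot x z + dot y z.
Proof. by rewrite /dot mulmxDl mxE. Qed.
Lemma dotDr m (x y z : 'rV['F_2]_m) : dot z (x + y) = dot z x + dot z y.
Proof. by rewrite /dot linearD /= mulmxDr mxE. Qed.
Lemma dotC m (x y : 'rV['F_2]_m) : dot x y = dot y x.
Proof. by rewrite !dotE; apply: eq_bigr => i _; rewrite mulrC. Qed.
Lemma dot0r m (x : 'rV['F_2]_m) : dot x 0 = 0.
Proof. by rewrite dotE big1 // => i _; rewrite mxE mulr0. Qed.

Lemma dot_vnS m i j : dot (vn m.+1 i) (vn m.+1 j) =
  dot (vn m (i %/ 2)) (vn m (j %/ 2)) + ((odd i)%:R * (odd j)%:R).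
Proof.
rewrite !dotE big_ord_recr /=; congr (_ + _).
  apply: eq_bigr => l _; rewrite !mxE /=.
  have e : (m.+1 - l.+1 = (m - l.+1).+1)%N by rewrite subSS subnS prednK // subn_gt0.
  by rewrite e !expnS !divnMA.
by rewrite !mxE /= subnn expn0 !divn1.
Qed.

Lemma Kpow_val (R : rcfType) m (i j : 'I_(2 ^ m)) :
  Kpow R m i j = (Num.sqrt 2)^-1 ^+ m * sg2 R (dot (vn m i) (vn m j)).
Proof.
elim: m i j => [|m IH] i j.
  rewrite /= mxE expr0 mul1r.
  have -> : i = j by apply/val_inj; case: i j => [[|?] ?] [[|?] ?].
  rewrite eqxx /= dotE big_ord0 sg2_0.
  done.
rewrite /= castmxE !mxE IH /=.
rewrite dot_vnS sg2D exprS !modn2.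
have -> : (if ((odd i : nat) == 1%N) && ((odd j : nat) == 1%N) then -1 else 1) = sg2 R ((odd i)%:R * (odd j)%:R).
  by case: (odd i); case: (odd j); rewrite /= ?mulr0 ?mul0r ?mulr1 ?sg2_0.
ring.
Qed.

Lemma sum_flip (R : numFieldType) (T : finType) (P : pred T) (f : T -> T) (g : T -> R) :
  involutive f -> (forall x, P (f x) = P x) -> (forall x, g (f x) = - g x) ->
  \sum_(x | P x) g x = 0.
Proof.
move=> finv hP hg.
have e : \sum_(x | P x) g x = - \sum_(x | P x) g x.
  rewrite {1}(reindex_inj (inv_inj finv)) /=.
  rewrite -sumrN; apply: eq_big => x; first by rewrite hP.
  by move=> _; rewrite hg.
have : (\sum_(x | P x) g x) *+ 2 = 0 by rewrite mulr2n {1}e addNr.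
by move/eqP; rewrite mulrn_eq0 /= => /eqP.
Qed.

Lemma addKF2 m (x y : 'rV['F_2]_m) : x + y + y = x.
Proof.
apply/rowP => i; rewrite !mxE -addrA F2_add_self addr0 //.
Qed.

Lemma dot_delta m (i : 'I_m) (z : 'rV['F_2]_m) : dot (delta_mx 0 i) z = z 0 i.
Proof. by rewrite /dot -rowE !mxE. Qed.

Lemma charsum (R : numFieldType) m (z : 'rV['F_2]_m) :
  \sum_(w : 'rV['F_2]_m) sg2 R (dot w z) = if z == 0 then (2 ^ m)%:R else 0.
Proof.
case: eqP => [->|/eqP nz].
  under eq_bigr => w _ do rewrite dot0r sg2_0.
  by rewrite sumr_const card_rV.
have [i hi] : exists i, z 0 i != 0.
  apply/existsP; apply: contraR nz => /existsPn h.
  by apply/eqP/rowP => j; rewrite mxE; have := h j; rewrite negbK => /eqP.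
have zi : z 0 i = 1 by case: (F2_cases (z 0 i)) hi => -> //; rewrite eqxx.
apply: (@sum_flip R _ predT (fun w => w + delta_mx 0 i)) => //.
  by move=> w; rewrite addKF2.
by move=> w; rewrite dotDl dot_delta zi sg2D sg2_1 mulrN1.
Qed.

Lemma sqrt2_sq (R : rcfType) : Num.sqrt (2 : R) ^+ 2 = 2.
Proof. by rewrite sqr_sqrtr // ler0n. Qed.

Lemma sqrt2_gt0 (R : rcfType) : 0 < Num.sqrt (2 : R).
Proof. by rewrite sqrtr_gt0 ltr0n. Qed.

Lemma normC (R : rcfType) n (C : {set 'rV['F_2]_n}) : self_dual C ->
  (Num.sqrt (2 : R))^-1 ^+ n * #|C|%:R = 1.
Proof.
case=> _ _ hc _.
have hpos : 0 <= (Num.sqrt (2 : R))^-1 ^+ n * #|C|%:R.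
  by rewrite mulr_ge0 // exprn_ge0 // invr_ge0 sqrtr_ge0.
have hsq : ((Num.sqrt (2 : R))^-1 ^+ n * #|C|%:R) ^+ 2 = 1.
  rewrite exprMn -exprM mulnC exprM exprVn sqrt2_sq -natrX hc natrX.
  by rewrite -exprMn mulVf ?expr1n // pnatr_eq0.
have := hsq; move/eqP; rewrite sqrf_eq1 => /orP [/eqP //|/eqP h].
by move: hpos; rewrite h ler0N1.
Qed.

Lemma mw (R : rcfType) n (C : {set 'rV['F_2]_n}) (x : 'rV['F_2]_n) : self_dual C ->
  (Num.sqrt (2 : R))^-1 ^+ n * \sum_(y : 'rV['F_2]_n) (y \in C)%:R * sg2 R (dot x y)
  = (x \in C)%:R.
Proof.
move=> hC; have := normC R hC; case: hC => _ hadd _ hperp hN.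
have -> : \sum_(y : 'rV['F_2]_n) (y \in C)%:R * sg2 R (dot x y) = \sum_(y in C) sg2 R (dot x y).
  rewrite [RHS]big_mkcond; apply: eq_bigr => y _.
  by case: (y \in C); rewrite ?mul1r ?mul0r.
case xC: (x \in C).
  rewrite (eq_bigr (fun _ => 1)); first by rewrite sumr_const hN.
  move=> y yC; move: xC; rewrite hperp => /forall_inP /(_ y yC) /eqP h.
  by rewrite /dot h mxE sg2_0.
move: xC; rewrite hperp => /negbT /forall_inPn [c cC hc].
have dc : dot x c = 1.
  case: (F2_cases (dot x c)) => // h; case/negP: hc; apply/eqP/matrixP => i j.
  by rewrite !ord1 [RHS]mxE; exact: h.
rewrite (@sum_flip R _ (mem C) (fun y => y + c)) ?mulr0 //.
- by move=> y; rewrite addKF2.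
- move=> y /=; apply/idP/idP => h; last exact: hadd.
  by rewrite -(addKF2 y c); apply: hadd.
- by move=> y; rewrite dotDr dc sg2D sg2_1 mulrN1.
Qed.

Lemma F2_sum (R : zmodType) (G : 'F_2 -> R) : \sum_(a : 'F_2) G a = G 0 + G 1.
Proof.
rewrite (bigD1 0) //= (bigD1 1) //= big_pred0 ?addr0 // => a.
by case: (F2_cases a) => ->.
Qed.

Lemma pow_wt (R : nzRingType) m (x : R) (u : 'rV['F_2]_m) :
  x ^+ wt u = \prod_i (if u 0 i != 0 then x else 1).
Proof. by rewrite /wt -prodr_const big_mkcond. Qed.

Lemma sg2_dot (R : nzRingType) m (u y : 'rV['F_2]_m) :
  sg2 R (dot u y) = \prod_i sg2 R (u 0 i * y 0 i).
Proof. by rewrite dotE (big_morph (sg2 R) (@sg2D R) (sg2_0 R)). Qed.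

Lemma sum_rV_ffun (R : zmodType) m (G : 'rV['F_2]_m -> R) :
  \sum_(u : 'rV['F_2]_m) G u = \sum_(f : {ffun 'I_m -> 'F_2}) G (\row_i f i).
Proof.
rewrite (reindex (fun f : {ffun 'I_m -> 'F_2} => \row_i f i)) //.
exists (fun u : 'rV['F_2]_m => [ffun i => u 0 i]) => [f _|u _].
  by apply/ffunP => i; rewrite ffunE mxE.
by apply/rowP => i; rewrite mxE ffunE.
Qed.

Lemma rho_sum (R : rcfType) t (y : 'rV['F_2]_t) :
  \sum_(u : 'rV['F_2]_t) rho R ^+ wt u * sg2 R (dot u y)
  = Num.sqrt 2 ^+ t * rho R ^+ wt y.
Proof.
under eq_bigr => u _ do rewrite pow_wt sg2_dot -big_split /=.
rewrite sum_rV_ffun.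
under eq_bigr => f _ do under eq_bigr => i _ do rewrite mxE.
rewrite -(bigA_distr_bigA (fun i a => (if a != 0 then rho R else 1) * sg2 R (a * y 0 i))) /=.
have -> : Num.sqrt (2:R) ^+ t = \prod_(i < t) Num.sqrt 2 by rewrite prodr_const card_ord.
rewrite pow_wt -big_split /=.
apply: eq_bigr => i _; rewrite F2_sum eqxx mul0r sg2_0 mulr1 mul1r.
have h2 := sqrt2_sq R.
case: (F2_cases (y 0 i)) => ->; rewrite ?mulr0 ?mulr1 ?sg2_0 ?sg2_1 ?eqxx /rho /=.
  ring.
rewrite mulrN1 mulrBr mulr1 -expr2 h2; ring.
Qed.

Lemma concat_l n t (u : 'rV['F_2]_t) (v : 'rV['F_2]_(n - t)) (i : 'I_n) (k : 'I_t) :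
  val i = val k -> (concat u v) 0 i = u 0 k.
Proof.
move=> e; rewrite mxE; case: ltnP => h.
  by congr (u 0 _); apply: val_inj.
by exfalso; move: h; rewrite e leqNgt ltn_ord.
Qed.

Lemma concat_r n t (u : 'rV['F_2]_t) (v : 'rV['F_2]_(n - t)) (i : 'I_n) (k : 'I_(n - t)) :
  val i = (t + k)%N -> (concat u v) 0 i = v 0 k.
Proof.
move=> e; rewrite mxE; case: ltnP => h.
  by exfalso; move: h; rewrite e ltnNge leq_addr.
by congr (v 0 _); apply: val_inj => /=; rewrite e addKn.
Qed.

Lemma sum_concat (R : zmodType) n t (h : (t <= n)%N) (G : 'rV['F_2]_n -> R) :
  \sum_(x : 'rV['F_2]_n) G x =
  \sum_(u : 'rV['F_2]_t) \sum_(v : 'rV['F_2]_(n - t)) G (concat u v).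
Proof.
have hr (i : 'I_(n - t)) : (t + i < n)%N by rewrite -ltn_subRL ltn_ord.
pose ls (x : 'rV['F_2]_n) : 'rV['F_2]_t := \row_(i < t) x 0 (widen_ord h i).
pose rs (x : 'rV['F_2]_n) : 'rV['F_2]_(n - t) := \row_(i < n - t) x 0 (Ordinal (hr i)).
rewrite pair_big /=.
rewrite (reindex (fun p : 'rV['F_2]_t * 'rV['F_2]_(n - t) => concat p.1 p.2)) //.
exists (fun x => (ls x, rs x)) => [[u v] _|x _] /=.
  congr (_, _); apply/rowP => i; rewrite mxE.
    exact: concat_l.
  exact: concat_r.
apply/rowP => j; case: (ltnP j t) => hj.
  by rewrite (@concat_l n t _ _ j (Ordinal hj)) // mxE; congr (x 0 _); apply: val_inj.
rewrite (@concat_r n t _ _ j (Ordinal (concat_lt hj))) /= ?subnKC // mxE.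
by congr (x 0 _); apply: val_inj => /=; rewrite subnKC.
Qed.

Lemma dot_concat n t (h : (t <= n)%N) (u y1 : 'rV['F_2]_t) (w y2 : 'rV['F_2]_(n - t)) :
  dot (concat u w) (concat y1 y2) = dot u y1 + dot w y2.
Proof.
have e : (t + (n - t) = n)%N by rewrite subnKC.
rewrite !dotE (reindex (cast_ord e)) /=; last first.
  by exists (cast_ord (esym e)) => i _; apply: val_inj.
rewrite big_split_ord /=; congr (_ + _); apply: eq_bigr => i _.
  by rewrite (@concat_l n t _ _ _ i) // (@concat_l n t _ _ _ i).
by rewrite (@concat_r n t _ _ _ i) // (@concat_r n t _ _ _ i).
Qed.

Lemma const_one (R : rcfType) n t : (t <= n)%N ->
  (Num.sqrt (2:R))^-1 ^+ n * (Num.sqrt (2:R))^-1 ^+ (n - t) *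
  (Num.sqrt 2 ^+ t * (2 ^ (n - t))%:R) = 1.
Proof.
move=> h; set s := Num.sqrt (2:R).
have s0 : s != 0 by rewrite gt_eqF // sqrt2_gt0.
rewrite -{1}(subnKC h) exprD natrX -(sqrt2_sq R) -/s exprAC !exprVn.
have p0 : s ^+ t != 0 by rewrite expf_neq0.
have q0 : s ^+ (n - t) != 0 by rewrite expf_neq0.
move: p0 q0; set p := s ^+ t; set q := s ^+ (n - t) => p0 q0.
have -> : p^-1 / q / q * (p * q ^+ 2) = (p^-1 * p) * (q^-1 * q) * (q^-1 * q) by ring.
by rewrite !mulVf // !mulr1.
Qed.

Lemma main_vec (R : rcfType) n (C : {set 'rV['F_2]_n}) t (h : (t <= n)%N) :
  self_dual C -> forall v : 'rV['F_2]_(n - t),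
  \sum_(w : 'rV['F_2]_(n - t))
     (\sum_(u : 'rV['F_2]_t) rho R ^+ wt u * (concat u w \in C)%:R) *
     ((Num.sqrt (2:R))^-1 ^+ (n - t) * sg2 R (dot w v))
  = \sum_(u : 'rV['F_2]_t) rho R ^+ wt u * (concat u v \in C)%:R.
Proof.
move=> hC v.
set s := (Num.sqrt (2:R))^-1.
set a := s ^+ n * s ^+ (n - t).
pose f (y : 'rV['F_2]_n) : R := (y \in C)%:R.
pose T w u y1 y2 := a * f (concat y1 y2) * (rho R ^+ wt u * sg2 R (dot u y1)) *
   (sg2 R (dot w y2) * sg2 R (dot w v)).
transitivity (\sum_w \sum_u \sum_y1 \sum_y2 T w u y1 y2).
  apply: eq_bigr => w _; rewrite big_distrl /=; apply: eq_bigr => u _.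
  rewrite -(mw R (concat u w) hC) (@sum_concat _ n t h) /=.
  rewrite !big_distrr /= big_distrl /=; apply: eq_bigr => y1 _.
  rewrite !big_distrr /= big_distrl /=; apply: eq_bigr => y2 _.
  rewrite /T /f dot_concat // sg2D /a; ring.
transitivity (\sum_y1 \sum_y2 \sum_u \sum_w T w u y1 y2).
  rewrite exchange_big /=.
  under eq_bigr => u _ do rewrite exchange_big /=.
  under eq_bigr => u _ do under eq_bigr => y1 _ do rewrite exchange_big /=.
  rewrite exchange_big /=; apply: eq_bigr => y1 _.
  by rewrite exchange_big.
transitivity (\sum_y1 \sum_y2 a * f (concat y1 y2) *
   (\sum_u rho R ^+ wt u * sg2 R (dot u y1)) *
   (\sum_(w : 'rV['F_2]_(n - t)) sg2 R (dot w (y2 + v)))).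
  apply: eq_bigr => y1 _; apply: eq_bigr => y2 _.
  rewrite [RHS](_ : _ = (\sum_u rho R ^+ wt u * sg2 R (dot u y1)) *
     (\sum_(w : 'rV['F_2]_(n - t)) a * f (concat y1 y2) * sg2 R (dot w (y2 + v)))); last first.
    by rewrite -big_distrr /=; ring.
  rewrite big_distrl /=; apply: eq_bigr => u _.
  rewrite big_distrr /=; apply: eq_bigr => w _.
  by rewrite /T dotDr sg2D; ring.
under eq_bigr => y1 _ do under eq_bigr => y2 _ do rewrite rho_sum charsum.
apply: eq_bigr => y1 _.
rewrite (bigD1 v) //= big1 ?addr0; last first.
  move=> y2 hy2; case: eqP; rewrite ?mulr0 // => e.
  by case/eqP: hy2; rewrite -(addKF2 y2 v) e add0r.
have vv : v + v = 0 by rewrite -{1}(add0r v) addKF2.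
rewrite vv eqxx /f.
have := const_one R h; rewrite -/s => e.
transitivity (rho R ^+ wt y1 * (concat y1 v \in C)%:R *
  (s ^+ n * s ^+ (n - t) * (Num.sqrt 2 ^+ t * (2 ^ (n - t))%:R))); last first.
  by rewrite e mulr1.
rewrite /a; ring.
Qed.

Lemma Wder_val (R : rcfType) n (C : {set 'rV['F_2]_n}) t (j : 'I_(2 ^ (n - t))) :
  Wder R C t 0 j = \sum_(u : 'rV['F_2]_t) rho R ^+ wt u * (concat u (vec_of_idx j) \in C)%:R.
Proof.
rewrite mxE; apply: eq_bigr => u _; rewrite mxE vec_idx.
by case: (_ \in C).
Qed.

Unset Implicit Arguments.
Local Open Scope ring_scope.
Theorem theorem6 (R : rcfType) (n : nat) (C : {set 'rV['F_2]_n}) :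
  self_dual C ->
  forall t : nat, (t <= n)%N ->
    (Wder R C t) *m (Kpow R (n - t)) = Wder R C t.
Proof.
move=> hC t h; apply/rowP => k.
rewrite mxE Wder_val -(@main_vec R n C t h hC (vec_of_idx k)).
rewrite (reindex (@idx_of_vec (n - t))) /=; last first.
  by exists (@vec_of_idx (n - t)) => [x _|j _]; rewrite ?vec_idx ?idx_vec.
apply: eq_bigr => w _; rewrite Wder_val Kpow_val vec_idx.
by rewrite -[vn (n - t) (idx_of_vec w)]/(vec_of_idx (idx_of_vec w)) vec_idx.
Qed.
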